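(* Let $\alpha=1/2$. (i) For every $(x,y)\in[0,1]^2$ with $x+y\ge 1$ we have $G_{1/2}(x,y)=(y,2-x-y)$, $G_{1/2}^2(x,y)=(2-x-y,x)$ and $G_{1/2}^3(x,y)=(x,y)$; in particular every such point is periodic with period $3$ except the fixed point $(2/3,2/3)$. The only fixed points of $G_{1/2}$ in $[0,1]^2$ are $(0,0)$ and $(2/3,2/3)$. (ii) For every $(x,y)\in[0,1]^2\setminus\{(0,0)\}$ there is $n\ge 0$ such that $G_{1/2}^n(x,y)=(u,v)$ satisfies $u+v\ge 1$; hence every point other than $(0,0)$ is periodic of period $3$, or fixed, or eventually periodic of period $3$ or eventually fixed.
   Context: Let $\tau:[0,1]\to[0,1]$ be the symmetric tent map, $\tau(x)=2x$ for $0\le x<1/2$ and $\tau(x)=2-2x$ for $1/2\le x\le 1$. For $0<\alpha<1$ define $G_\alpha:[0,1]^2\to[0,1]^2$ by $G_\alpha(x,y)=(y,\tau(\alpha y+(1-\alpha)x))$. *)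

(* Defs.v *)
From Stdlib Require Import Reals Lra.
Open Scope R_scope.

Definition tau (x : R) : R :=
  if Rlt_dec x (1/2) then 2 * x else 2 - 2 * x.

Definition G (alpha : R) (p : R * R) : R * R :=
  (snd p, tau (alpha * snd p + (1 - alpha) * fst p)).

Definition Giter (alpha : R) (n : nat) (p : R * R) : R * R :=
  Nat.iter n (G alpha) p.

Definition in_square (p : R * R) : Prop :=
  0 <= fst p <= 1 /\ 0 <= snd p <= 1.

Definition period3 (alpha : R) (q : R * R) : Prop :=
  Giter alpha 3 q = q /\ G alpha q <> q /\ Giter alpha 2 q <> q.

(* Main.v *)
Require Import Defs.
From Stdlib Require Import Reals Lra ZArith.
Open Scope R_scope.

Lemma G_hi x y : x + y >= 1 -> G (1/2) (x, y) = (y, 2 - x - y).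
Proof. intros H. unfold G, tau; simpl. destruct Rlt_dec; [lra|]. f_equal; lra. Qed.

Lemma G_lo x y : x + y < 1 -> G (1/2) (x, y) = (y, x + y).
Proof. intros H. unfold G, tau; simpl. destruct Rlt_dec; [|lra]. f_equal; lra. Qed.

Lemma G_sq p : in_square p -> in_square (G (1/2) p).
Proof. destruct p as [x y]; intros H. pose proof H as H'; unfold in_square in H'; simpl in H'.
  destruct (Rlt_dec (x+y) 1) as [h|h].
  - rewrite G_lo by lra. unfold in_square; simpl. lra.
  - rewrite G_hi by lra. unfold in_square; simpl. lra. Qed.

Lemma Giter_sq n p : in_square p -> in_square (Giter (1/2) n p).
Proof. induction n; simpl; intros; auto. apply G_sq; auto. Qed.

Lemma Giter_add n m p : Giter (1/2) (n + m) p = Giter (1/2) n (Giter (1/2) m p).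
Proof. induction n; simpl; auto. unfold Giter in *; simpl. now rewrite IHn. Qed.

Lemma part1 x y : in_square (x, y) -> x + y >= 1 ->
     G (1/2) (x, y) = (y, 2 - x - y) /\
     Giter (1/2) 2 (x, y) = (2 - x - y, x) /\
     Giter (1/2) 3 (x, y) = (x, y) /\
     ((x, y) <> (2/3, 2/3) -> period3 (1/2) (x, y)).
Proof.
  unfold in_square; simpl; intros Hs H.
  assert (E1 : G (1/2) (x, y) = (y, 2 - x - y)) by (apply G_hi; lra).
  assert (E2 : Giter (1/2) 2 (x, y) = (2 - x - y, x)).
  { change (G (1/2) (G (1/2) (x,y)) = (2 - x - y, x)). rewrite E1, G_hi by lra. f_equal; lra. }
  assert (E3 : Giter (1/2) 3 (x, y) = (x, y)).
  { change (G (1/2) (Giter (1/2) 2 (x,y)) = (x, y)). rewrite E2, G_hi by lra. f_equal; lra. }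
  repeat split; auto.
  - rewrite E1. intros He. injection He; intros. apply H0. f_equal; lra.
  - rewrite E2. intros He. injection He; intros. apply H0. f_equal; lra.
Qed.

Lemma part2 p : in_square p -> (G (1/2) p = p <-> p = (0, 0) \/ p = (2/3, 2/3)).
Proof.
  destruct p as [x y]; unfold in_square; simpl; intros Hs. split.
  - unfold G, tau; simpl. destruct Rlt_dec; intros He; injection He; intros.
    + left. f_equal; lra.
    + right. f_equal; lra.
  - intros [He|He]; injection He; intros; subst.
    + rewrite G_lo by lra. f_equal; lra.
    + rewrite G_hi by lra. f_equal; lra.
Qed.

Lemma reach k : forall x y, in_square (x, y) -> x + y >= / 2 ^ k ->
  exists n, fst (Giter (1/2) n (x,y)) + snd (Giter (1/2) n (x,y)) >= 1.
Proof.
  induction k; intros x y Hs H.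
  - exists 0%nat. simpl in *. lra.
  - destruct (Rlt_dec (x+y) 1) as [h|h]; [|exists 0%nat; simpl; lra].
    destruct (Rlt_dec (y + (x+y)) 1) as [h2|h2].
    + unfold in_square in Hs; simpl in Hs.
      assert (E : Giter (1/2) 2 (x,y) = (x+y, y+(x+y))).
      { change (G (1/2) (G (1/2) (x,y)) = (x+y, y+(x+y))). rewrite G_lo by lra.
        rewrite G_lo by lra. reflexivity. }
      assert (Hp : 0 < 2 ^ k) by (apply pow_lt; lra).
      destruct (IHk (x+y) (y+(x+y))) as [n Hn].
      * unfold in_square; simpl; lra.
      * simpl in H. rewrite Rinv_mult in H. lra.
      * exists (n + 2)%nat. rewrite Giter_add, E. exact Hn.
    + exists 1%nat. change (fst (G (1/2) (x,y)) + snd (G (1/2) (x,y)) >= 1).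
      rewrite G_lo by lra. simpl. lra.
Qed.

Lemma pow2_ge n : INR n <= 2 ^ n.
Proof. induction n; [simpl; lra|]. rewrite S_INR; simpl.
  assert (1 <= 2 ^ n) by (apply pow_R1_Rle; lra). lra. Qed.

Lemma part3 p : in_square p -> p <> (0, 0) ->
     exists n : nat, fst (Giter (1/2) n p) + snd (Giter (1/2) n p) >= 1.
Proof.
  destruct p as [x y]; intros Hs Hne. pose proof Hs as Hs'.
  unfold in_square in Hs'; simpl in Hs'.
  assert (Hpos : 0 < x + y).
  { destruct (Req_dec x 0); destruct (Req_dec y 0); try lra. subst. now elim Hne. }
  destruct (archimed (/ (x+y))) as [H1 _].
  destruct (Z_of_nat_complete_inf (up (/ (x+y)))) as [N HN].
  { apply le_IZR. assert (0 < / (x+y)) by (apply Rinv_0_lt_compat; lra). simpl. lra. }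
  apply (reach N); auto.
  rewrite HN, <- INR_IZR_INZ in H1. pose proof (pow2_ge N).
  assert (0 < 2 ^ N) by (apply pow_lt; lra).
  apply Rle_ge. rewrite <- (Rinv_inv (x+y)). apply Rinv_le_contravar.
  - apply Rinv_0_lt_compat; lra.
  - lra.
Qed.

Theorem mainTheorem5 :
  (* (i) *)
  (forall x y : R, in_square (x, y) -> x + y >= 1 ->
     G (1/2) (x, y) = (y, 2 - x - y) /\
     Giter (1/2) 2 (x, y) = (2 - x - y, x) /\
     Giter (1/2) 3 (x, y) = (x, y) /\
     ((x, y) <> (2/3, 2/3) -> period3 (1/2) (x, y))) /\
  (forall p : R * R, in_square p ->
     (G (1/2) p = p <-> p = (0, 0) \/ p = (2/3, 2/3))) /\
  (* (ii) *)
  (forall p : R * R, in_square p -> p <> (0, 0) ->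
     exists n : nat, fst (Giter (1/2) n p) + snd (Giter (1/2) n p) >= 1) /\
  (forall p : R * R, in_square p -> p <> (0, 0) ->
     exists n : nat,
       G (1/2) (Giter (1/2) n p) = Giter (1/2) n p \/
       period3 (1/2) (Giter (1/2) n p)).
Proof.
  split; [exact part1|]. split; [exact part2|]. split; [exact part3|].
  intros p Hs Hne. destruct (part3 p Hs Hne) as [n Hn]. exists n.
  pose proof (Giter_sq n p Hs) as Hq.
  destruct (Giter (1/2) n p) as [u v] eqn:Eq. simpl in Hn.
  destruct (part1 u v Hq Hn) as (_ & _ & _ & P).
  destruct (Req_dec u (2/3)); destruct (Req_dec v (2/3)).
  - left. subst. apply part2; auto.
  - right. apply P. intros He; injection He; intros; lra.
  - right. apply P. intros He; injection He; intros; lra.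
  - right. apply P. intros He; injection He; intros; lra.
Qed.
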